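(* Let $q\ge3$, $G\in\mathbb G^q$, $S=\Psi(G)$ with core $C$. Let $w$ be a white vertex of $S$ that belongs to $C$ and is not a chain-vertex of $C$. If at least one core-chain of $C$ incident to $w$ contains at least one internal white vertex, then $w$ is admissible.
   Context: Fix an integer $q\ge 2$. A $(q+1)$-edge-colored graph (colored graph) is a finite connected graph, multiple edges allowed and no loops, whose edges carry colors in $\{0,1,\dots,q\}$ such that every vertex is incident to exactly one edge of each color. It is rooted if one color-0 edge is distinguished and oriented; it is bipartite if its vertices can be colored black and white so that every edge joins a black and a white vertex, with the convention that the origin of the root edge is black. $\mathbb G^q$ denotes the set of rooted bipartite colored graphs. Constellations: given $G\in\mathbb G^q$, its constellation $S=\Psi(G)$ is obtained as follows: orient every edge from its black to its white endpoint; contract every color-0 edge into a single vertex, called a white vertex of $S$ (the one coming from the root edge is the root vertex). For each $i\in\{1,\dots,q\}$ the color-$i$ edges now form directed cycles; for each such cycle, passing through white vertices $w_1,\dots,w_p$ in this cyclic order, add a new vertex of color $i$ joined by one color-$i$ edge to each $w_k$, equip the new vertex with the cyclic order $(w_1,\dots,w_p)$ of its incident edges, and delete the original color-$i$ edges of the cycle. Core: the core $C$ of $S$ is obtained by repeatedly deleting a vertex of degree $1$ other than the root vertex, together with its incident edge, until every non-root vertex has degree at least 2; a vertex of $S$ belongs to $C$ if it is not deleted. A chain-vertex of $C$ is a non-root vertex of degree $2$ in $C$; a core-chain is a path of $C$ (possibly closed) whose internal vertices are chain-vertices and whose extremities are not chain-vertices. A white vertex $w$ of $S=\Psi(G)$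 is admissible if the two endpoints of the color-0 edge of $G$ contracted to $w$ are joined in $G$ by a path containing no color-0 edge. *)

(* Defs.v *)
From mathcomp Require Import all_boot.
From Stdlib Require Import Relations.
Set Implicit Arguments. Unset Strict Implicit. Unset Printing Implicit Defensive.

(* A (q+1)-edge-colored graph on vertex type V is given by, for each color
   i : 'I_q.+1, the map sigma i sending a vertex to the other endpoint of
   its unique incident color-i edge. Color 0 is ord0; color j+1 (j : 'I_q)
   is lift ord0 j. *)
Definition col (q : nat) (j : 'I_q) : 'I_q.+1 := lift ord0 j.

Definition Gadj (q : nat) (V : finType) (sigma : 'I_q.+1 -> V -> V) : rel V :=
  fun a c => [exists i : 'I_q.+1, sigma i a == c].

Definition colored_graph (q : nat) (V : finType) (sigma : 'I_q.+1 -> V -> V) : Prop :=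
  [/\ (forall i v, sigma i (sigma i v) = v),
      (forall i v, sigma i v != v) &
      (forall u v, connect (Gadj sigma) u v)].

(* root edge = color-0 edge {r, sigma 0 r} oriented from r; bipartition
   black/white with r black *)
Definition rooted_bipartite (q : nat) (V : finType) (sigma : 'I_q.+1 -> V -> V)
  (r : V) (black : V -> bool) : Prop :=
  black r /\ (forall i v, black (sigma i v) = ~~ black v).

(* White vertices of S = color-0 edges of G,
   represented by their black endpoint: inl b.  A color-(j+1) vertex of S is
   a directed cycle of color-(j+1) edges after contracting color-0 edges,
   i.e. an orbit of phi j := sigma 0 \o sigma (j+1) on black vertices,
   represented by inr (j, c) with c the canonical root of the orbit. *)
Notation svert q V := (V + ('I_q * V))%type.

Definition phi (q : nat) (V : finType) (sigma : 'I_q.+1 -> V -> V) (j : 'I_q)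
  (v : V) : V := sigma ord0 (sigma (col j) v).

Definition svalid (q : nat) (V : finType) (sigma : 'I_q.+1 -> V -> V)
  (black : V -> bool) (x : svert q V) : bool :=
  match x with
  | inl b => black b
  | inr (j, c) => black c && (froot (phi sigma j) c == c)
  end.

Definition adjS (q : nat) (V : finType) (sigma : 'I_q.+1 -> V -> V)
  (black : V -> bool) : rel (svert q V) :=
  fun x y => [&& svalid sigma black x, svalid sigma black y &
    match x, y with
    | inl b, inr (j, c) => froot (phi sigma j) b == c
    | inr (j, c), inl b => froot (phi sigma j) b == c
    | _, _ => false
    end].

Definition is_white (q : nat) (V : finType) (x : svert q V) : bool :=
  if x is inl _ then true else false.

(* degree of x in the subgraph of S induced by X (S is simple) *)
Definition deg (q : nat) (V : finType) (sigma : 'I_q.+1 -> V -> V)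
  (black : V -> bool) (X : {set svert q V}) (x : svert q V) : nat :=
  #|[set y in X | adjS sigma black x y]|.

Definition prune_step (q : nat) (V : finType) (sigma : 'I_q.+1 -> V -> V)
  (black : V -> bool) (rootS : svert q V) (X Y : {set svert q V}) : Prop :=
  exists2 x, x \in X &
    [/\ x != rootS, deg sigma black X x = 1 & Y = X :\ x].

Definition is_core (q : nat) (V : finType) (sigma : 'I_q.+1 -> V -> V)
  (black : V -> bool) (r : V) (C : {set svert q V}) : Prop :=
  clos_refl_trans _ (prune_step sigma black (inl r))
    [set x | svalid sigma black x] C /\
  (forall x, x \in C -> x != inl r -> 2 <= deg sigma black C x).

Definition chain_vertex (q : nat) (V : finType) (sigma : 'I_q.+1 -> V -> V)
  (black : V -> bool) (r : V) (C : {set svert q V}) (x : svert q V) : bool :=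
  [&& x \in C, x != inl r & deg sigma black C x == 2].

(* Path: the
   vertices x0..x(k-1) are distinct; a closed path (xk = x0) has at least
   3 edges, so that no edge is used twice in the simple graph S. *)
Definition has_white_core_chain_at (q : nat) (V : finType)
  (sigma : 'I_q.+1 -> V -> V) (black : V -> bool) (r : V)
  (C : {set svert q V}) (w : svert q V) : Prop :=
  exists xs : seq (svert q V),
    let internal := take (size xs).-1 xs in
    let e := last w xs in
    [/\ path (fun a b => [&& a \in C, b \in C & adjS sigma black a b]) w xs,
        2 <= size xs,
        all (chain_vertex sigma black r C) internal,
        ~~ chain_vertex sigma black r C e &
        [/\ uniq (w :: internal),
            (e == w) -> 3 <= size xs &
            has (@is_white q V) internal]].

Definition admissible (q : nat) (V : finType) (sigma : 'I_q.+1 -> V -> V)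
  (b : V) : Prop :=
  connect (fun u v => [exists j : 'I_q, sigma (col j) u == v]) b (sigma ord0 b).

(* Main.v *)
Require Import Defs.
From Stdlib Require Import Relations.
From mathcomp Require Import all_boot.

Set Implicit Arguments. Unset Strict Implicit. Unset Printing Implicit Defensive.

Lemma phi_inj q (V : finType) (sigma : 'I_q.+1 -> V -> V)
  (Hinv : forall i v, sigma i (sigma i v) = v) j : injective (phi sigma j).
Proof.
move=> x y /(congr1 (sigma ord0)); rewrite /phi !Hinv.
by move=> /(congr1 (sigma (col j))); rewrite !Hinv.
Qed.

Lemma phi_black q (V : finType) (sigma : 'I_q.+1 -> V -> V) black
  (Hb : forall i v, black (sigma i v) = ~~ black v) j n v :
  black (iter n (phi sigma j) v) = black v.
Proof. by elim: n => //= n IH; rewrite /phi !Hb negbK IH. Qed.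

Lemma froot_iter q (V : finType) (sigma : 'I_q.+1 -> V -> V)
  (Hinv : forall i v, sigma i (sigma i v) = v) j n v :
  froot (phi sigma j) (iter n (phi sigma j) v) = froot (phi sigma j) v.
Proof.
symmetry; have symj : connect_sym (frel (phi sigma j)) by move=> ? ?; apply: fconnect_sym; exact: phi_inj.
apply/(rootP symj).
exact: fconnect_iter.
Qed.

Lemma froot_black q (V : finType) (sigma : 'I_q.+1 -> V -> V) black
  (Hinv : forall i v, sigma i (sigma i v) = v)
  (Hb : forall i v, black (sigma i v) = ~~ black v) j v :
  black (froot (phi sigma j) v) = black v.
Proof.
have := connect_root (frel (phi sigma j)) v => /iter_findex <-.
exact: phi_black.
Qed.

Lemma adm_sym q (V : finType) (sigma : 'I_q.+1 -> V -> V)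
  (Hinv : forall i v, sigma i (sigma i v) = v) :
  connect_sym (fun u v => [exists j : 'I_q, sigma (col j) u == v]).
Proof.
apply: sym_connect_sym => u v; apply/existsP/existsP => -[j /eqP <-];
  by exists j; rewrite Hinv.
Qed.

Lemma lemA q (V : finType) (sigma : 'I_q.+1 -> V -> V)
  (Hinv : forall i v, sigma i (sigma i v) = v) j b0 :
  (forall n, iter n.+1 (phi sigma j) b0 != b0 ->
     admissible sigma (iter n.+1 (phi sigma j) b0)) ->
  admissible sigma b0.
Proof.
move=> H.
set E := (fun u v => [exists j : 'I_q, sigma (col j) u == v]).
have symE := adm_sym Hinv.
have step : forall v, connect E (sigma ord0 (phi sigma j v)) v.
  move=> v; rewrite /phi Hinv; apply: connect1; apply/existsP; exists j.
  by rewrite Hinv.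
have key : forall n, connect E (sigma ord0 (iter n.+1 (phi sigma j) b0)) b0.
  elim=> [|n IH]; first exact: step.
  rewrite iterS; apply: connect_trans (step _) _.
  case: (eqVneq (iter n.+1 (phi sigma j) b0) b0) => [->|ne]; first exact: connect0.
  apply: connect_trans _ IH; have := H n ne; rewrite /admissible -/E.
  done.
have := order_gt0 (phi sigma j) b0.
have := iter_order (phi_inj (j:=j) Hinv) b0.
case: (order _ _) => [|n] // Hit _.
have := key n; rewrite Hit => K.
by rewrite /admissible -/E symE.
Qed.

Definition Inv q (V : finType) (sigma : 'I_q.+1 -> V -> V) (black : V -> bool)
  (X : {set svert q V}) : Prop :=
  forall y, black y ->
   (inl y \notin X \/ exists j, inr (j, froot (phi sigma j) y) \notin X) ->
   admissible sigma y.

Lemma deg_white q (V : finType) (sigma : 'I_q.+1 -> V -> V) black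
  (Hinv : forall i v, sigma i (sigma i v) = v)
  (Hb : forall i v, black (sigma i v) = ~~ black v)
  (X : {set svert q V}) y :
  black y -> (forall j, inr (j, froot (phi sigma j) y) \in X) ->
  q <= deg sigma black X (inl y).
Proof.
move=> hby HX; rewrite /deg.
have Hc : #|[set (inr (j, froot (phi sigma j) y) : svert q V) | j : 'I_q]| = q.
  by rewrite card_imset ?card_ord // => j1 j2 [].
rewrite -[X in X <= _]Hc.
apply: subset_leq_card; apply/subsetP => z /imsetP [j _ ->].
rewrite inE HX /= /adjS /= hby froot_black // hby.
by rewrite (root_root (fconnect_sym (phi_inj (j:=j) Hinv))) !eqxx.
Qed.

Lemma Inv_step q (V : finType) (sigma : 'I_q.+1 -> V -> V) black r
  (Hq : 2 <= q)
  (Hinv : forall i v, sigma i (sigma i v) = v)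
  (Hb : forall i v, black (sigma i v) = ~~ black v)
  (X Y : {set svert q V}) :
  prune_step sigma black (inl r) X Y -> Inv sigma black X -> Inv sigma black Y.
Proof.
move=> [x xX [_ dx ->]] IX.
have [z Hz] : exists z, [set y in X | adjS sigma black x y] = [set z].
  by apply/cards1P; rewrite /deg in dx; rewrite dx.
have zin : z \in [set y in X | adjS sigma black x y] by rewrite Hz set11.
rewrite inE in zin; case/andP: zin => zX azx.
case: x xX dx Hz azx => [y0|[j c]] xX dx Hz azx.
- case/and3P: azx => /= by0 _ _.
  have ad0 : admissible sigma y0.
    apply: IX => //; right.
    apply/existsP; rewrite -negb_forall; apply/negP => /forallP Hall.
    have := deg_white Hinv Hb by0 (X := X) (fun j => Hall j).
    by rewrite dx; move/(leq_trans Hq).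
  move=> y byy [|[j Hj]].
    rewrite !inE negb_and negbK => /orP [/eqP [->] //|ny]; by apply: IX => //; left.
  by apply: IX => //; right; exists j; move: Hj; rewrite !inE negb_and.
- case/and3P: azx => /= /andP [bc rc] _.
  case: z Hz zX => [u|//] Hz uX /eqP ruc.
  have adjc : forall y, black y -> froot (phi sigma j) y = c -> inl y \in X ->
      y = u.
    move=> y byy ryc yX.
    have : inl y \in [set y in X | adjS sigma black (inr (j, c)) y].
      by rewrite inE yX /adjS /= bc rc byy ryc eqxx.
    by rewrite Hz inE => /eqP [].
  have bu : black u.
    have : inl u \in [set y in X | adjS sigma black (inr (j, c)) y] by rewrite Hz set11.
    by rewrite inE /adjS /= => /andP [_ /and3P [_ -> _]].
  have adu : admissible sigma u.
    apply: (lemA Hinv (j := j)) => n ne.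
    apply: IX; first by rewrite phi_black.
    left; apply/negP => H; move: ne; rewrite (adjc _ _ _ H) ?eqxx //.
      by rewrite phi_black.
    by rewrite froot_iter.
  have adc : forall y, black y -> froot (phi sigma j) y = c -> admissible sigma y.
    move=> y byy ryc; case: (boolP (inl y \in X)) => yX.
      by rewrite (adjc _ byy ryc yX).
    by apply: IX => //; left.
  move=> y byy [|[j' Hj']].
    by rewrite !inE negb_and negbK /= => ny; apply: IX => //; left.
  move: Hj'; rewrite !inE negb_and negbK => /orP [/eqP [e1 e2]|ny].
    by subst j'; apply: adc.
  by apply: IX => //; right; exists j'.
Qed.

Lemma Inv_rt q (V : finType) (sigma : 'I_q.+1 -> V -> V) black r
  (Hq : 2 <= q)
  (Hinv : forall i v, sigma i (sigma i v) = v)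
  (Hb : forall i v, black (sigma i v) = ~~ black v)
  (X Y : {set svert q V}) :
  clos_refl_trans _ (prune_step sigma black (inl r)) X Y ->
  Inv sigma black X -> Inv sigma black Y.
Proof.
elim=> [A B H|A|A B D _ IH1 _ IH2]; last by move=> /IH1 /IH2.
  exact: (Inv_step Hq Hinv Hb H).
done.
Qed.

Theorem mainTheorem9 (q : nat) (V : finType) (sigma : 'I_q.+1 -> V -> V)
  (r : V) (black : V -> bool) (C : {set svert q V}) (b : V) :
  3 <= q ->
  colored_graph sigma ->
  rooted_bipartite sigma r black ->
  is_core sigma black r C ->
  black b ->
  inl b \in C ->
  ~~ chain_vertex sigma black r C (inl b) ->
  has_white_core_chain_at sigma black r C (inl b) ->
  admissible sigma b.
Proof.
move=> Hq [Hinv _ _] [_ Hb] [Hrt _] bb bC _ [xs [Hp Hs Hint _ [Hu _ Hw]]].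
have Hq2 : 2 <= q by apply: ltnW.
have IC : Inv sigma black C.
  apply: (Inv_rt Hq2 Hinv Hb Hrt) => y byy [|[j]]; rewrite inE /= ?byy //.
  by rewrite froot_black // byy (root_root (fconnect_sym (phi_inj (j:=j) Hinv))) eqxx.
case: xs Hp Hs Hint Hu Hw => [|c1 [|x1 rest]] //= Hp _ Hint Hu Hw.
case: rest Hp Hint Hu Hw => [|x2 rest] Hp Hint Hu Hw.
  move: Hw => /=; rewrite orbF; case: (c1) Hp => //= v /andP [/and3P [_ _]].
  by rewrite /adjS /= !andbF.
case/and3P: Hp => /and3P [_ c1C a1] /and3P [_ x1C a2] _.
rewrite /= in Hint Hu; case/and3P: Hint => cv1 cv2 _.
clear Hw.
case: c1 c1C a1 a2 cv1 Hu => [v|[j c]] c1C a1 a2 cv1 Hu.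
  by move: a1; rewrite /adjS /= !andbF.
case: x1 x1C a2 cv2 Hu => [b1|[j' c']] x1C a2 cv2 Hu; last first.
  by move: a2; rewrite /adjS /= !andbF.
move: a1; rewrite /adjS /= => /and3P [_ /andP [bc rc] /eqP rb].
move: a2; rewrite /adjS /= => /and3P [_ bb1 /eqP rb1].
have ad1 : admissible sigma b1.
  apply: IC => //; right.
  apply/existsP; rewrite -negb_forall; apply/negP => /forallP Hall.
  have := deg_white Hinv Hb bb1 (X := C) (fun j => Hall j).
  by case/and3P: cv2 => _ _ /eqP ->; move/(leq_trans Hq).
have nb : inl b != inl b1 :> svert q V.
  by case/and4P: Hu; rewrite !inE !negb_or => /and3P [_ ? _].
case/and3P: cv1 => _ _ /eqP d2.
set S := [set y in C | adjS sigma black (inr (j, c)) y] in d2.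
have inS : forall y, black y -> froot (phi sigma j) y = c -> inl y \in C -> inl y \in S.
  by move=> y byy ry yC; rewrite inE yC /adjS /= bc rc byy ry eqxx.
have S0 : S :\ inl b :\ inl b1 = set0.
  apply: cards0_eq; move: d2; rewrite /deg -/S.
  rewrite (cardsD1 (inl b) S) (cardsD1 (inl b1) (S :\ inl b)) in_setD1.
  rewrite (inS b) // (inS b1) // eq_sym nb.
  by move=> [].
apply: (lemA Hinv (j := j)) => n ne.
set y := iter _ _ _ in ne *.
have hby : black y by rewrite /y phi_black.
have ry : froot (phi sigma j) y = c by rewrite /y froot_iter.
case: (boolP (inl y \in C)) => yC; last by apply: IC => //; left.
case: (eqVneq y b1) => [->//|ne1].
have : inl y \in S :\ inl b :\ inl b1 by rewrite !in_setD1 /= ne1 ne inS.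
by rewrite S0 inE.
Qed.
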